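(* Let $X$ be a metrizable space and $\mathcal{U}$ an open cover of $X$. Then there is an l-complete continuous dissection $\mathcal{F}$ over $X$ such that every minimal $\mathcal{F}$-wedge is contained in $U\times I$ for some $U\in\mathcal{U}$.
   Context: Let $I=(0,1]$. For a metrizable space $X$, a continuous dissection over $X$ is a family $\mathcal{F}$ of continuous functions $X\to[0,1]$ containing the constant functions $0$ and $1$ that is locally finite: every $x\in X$ has a neighbourhood $U$ such that $\{\xi|_U:\xi\in\mathcal{F}\}$ is finite. It is l-complete if it is closed under pointwise maximum, pointwise minimum and pointwise limits of convergent directed families. An $\mathcal{F}$-wedge is a subset of $X\times I$ of the form $\{(x,t):\xi_1(x)<t\le\xi_2(x)\}$ with $\xi_1,\xi_2\in\mathcal{F}$; a minimal $\mathcal{F}$-wedge is a nonempty $\mathcal{F}$-wedge minimal under inclusion. *)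

(* Defs.v *)
From Stdlib Require Import Reals List.
Open Scope R_scope.

(* A metric space.  Every notion below (open set, continuity, local
   finiteness) is topological, so quantifying over metric spaces is the
   same as quantifying over metrizable spaces. *)
Record MetricSpace := {
  mcarrier :> Type;
  mdist : mcarrier -> mcarrier -> R;
  mdist_nonneg : forall x y, 0 <= mdist x y;
  mdist_eq0 : forall x y, mdist x y = 0 <-> x = y;
  mdist_sym : forall x y, mdist x y = mdist y x;
  mdist_tri : forall x y z, mdist x z <= mdist x y + mdist y z
}.

Section Defs.
Variable X : MetricSpace.

Definition is_open (U : X -> Prop) : Prop :=
  forall x, U x -> exists eps, 0 < eps /\ forall y, mdist X x y < eps -> U y.

Definition open_cover (UU : (X -> Prop) -> Prop) : Prop :=
  (forall U, UU U -> is_open U) /\ (forall x, exists U, UU U /\ U x).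

Definition continuous_fun (f : X -> R) : Prop :=
  forall x eps, 0 < eps -> exists delta, 0 < delta /\
    forall y, mdist X x y < delta -> Rabs (f y - f x) < eps.

Definition locally_finite (F : (X -> R) -> Prop) : Prop :=
  forall x, exists U : X -> Prop, is_open U /\ U x /\
    exists l : list (X -> R),
      forall f, F f -> exists g, In g l /\ forall y, U y -> f y = g y.

Definition continuous_dissection (F : (X -> R) -> Prop) : Prop :=
  (forall f, F f -> continuous_fun f /\ forall x, 0 <= f x <= 1) /\
  F (fun _ => 0) /\ F (fun _ => 1) /\
  locally_finite F.

Definition directed_family_converges (F : (X -> R) -> Prop)
  (I : Type) (le : I -> I -> Prop) (f : I -> X -> R) (g : X -> R) : Prop :=
  (forall i, le i i) /\ (forall i j k, le i j -> le j k -> le i k) /\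
  inhabited I /\ (forall i j, exists k, le i k /\ le j k) /\
  (forall i, F (f i)) /\
  (forall x eps, 0 < eps -> exists i0, forall i, le i0 i ->
     Rabs (f i x - g x) < eps).

Definition l_complete (F : (X -> R) -> Prop) : Prop :=
  (forall f g, F f -> F g -> F (fun x => Rmax (f x) (g x))) /\
  (forall f g, F f -> F g -> F (fun x => Rmin (f x) (g x))) /\
  (forall (I : Type) (le : I -> I -> Prop) (f : I -> X -> R) (g : X -> R),
     directed_family_converges F I le f g -> F g).

(* The F-wedge between xi1 and xi2, as a subset of X x I with I = (0,1]. *)
Definition wedge (xi1 xi2 : X -> R) (p : X * R) : Prop :=
  0 < snd p <= 1 /\ xi1 (fst p) < snd p /\ snd p <= xi2 (fst p).

Definition is_wedge (F : (X -> R) -> Prop) (W : X * R -> Prop) : Prop :=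
  exists xi1 xi2, F xi1 /\ F xi2 /\ forall p, W p <-> wedge xi1 xi2 p.

Definition minimal_wedge (F : (X -> R) -> Prop) (W : X * R -> Prop) : Prop :=
  is_wedge F W /\ (exists p, W p) /\
  forall W', is_wedge F W' -> (exists p, W' p) ->
    (forall p, W' p -> W p) -> forall p, W p -> W' p.

End Defs.

(* Main.v *)
Require Import Defs.
From Stdlib Require Import Reals List Lra Lia ClassicalEpsilon Classical.
Open Scope R_scope.
From mathcomp Require ssreflect ssrfun ssrbool eqtype boolp wochoice.
Module WO.
Import ssreflect ssrfun ssrbool eqtype boolp wochoice.
Lemma wo_exists (T : Type) : exists R : T -> T -> Prop,
  (forall x y, R x y -> R y x -> x = y) /\
  (forall x y z, R x y -> R y z -> R x z) /\
  (forall x y, R x y \/ R y x) /\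
  (forall A : T -> Prop, (exists x, A x) -> exists z, A z /\ forall y, A y -> R z y).
Proof.
have [R woR] := @well_ordering_principle {classic T}.
have ch := @wo_chainW {classic T} R predT (fun A _ => woR A).
have anti := @wo_chain_antisymmetric {classic T} R predT (fun A _ => woR A).
have mn : forall A : T -> Prop, (exists x, A x) -> exists z, A z /\ forall y, A y -> R z y.
  move=> A [x Ax].
  have [|z [[zA lb] _]] := woR [pred y : {classic T} | `[< A y >] ].
    by exists x; rewrite inE; apply/asboolP.
  exists z; split; first by move: zA; rewrite inE => /asboolP.
  by move=> y Ay; apply: lb; rewrite inE; apply/asboolP.
exists (fun x y => R x y); split; [|split; [|split]].
- by move=> x y h1 h2; apply: anti => //; rewrite h1 h2.
- move=> x y z hxy hyz.
  have [|m [hm lb]] := mn (fun w => w = x \/ w = y \/ w = z); first by exists x; left.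
  case: hm => [E|[E|E]]; subst m; first by apply: lb; right; right.
  + have hyx : R y x by apply: lb; left.
    by have -> : x = y by apply: anti => //; rewrite hxy hyx.
  + have hzy : R z y by apply: lb; right; left.
    by have <- : y = z by apply: anti => //; rewrite hzy hyz.
- by move=> x y; have := ch x y isT isT; case/orP; [left|right].
- exact: mn.
Qed.
End WO.


Definition Sup (A : R -> Prop) : R :=
  match excluded_middle_informative (bound A /\ exists x, A x) with
  | left h => proj1_sig (completeness A (proj1 h) (proj2 h))
  | right _ => 0 end.

Lemma Sup_ub A a : bound A -> A a -> a <= Sup A.
Proof. intros hb ha. unfold Sup. destruct excluded_middle_informative as [h|h].
 - destruct (completeness _ _ _) as [m [hm1 hm2]]; simpl. apply hm1; auto.
 - exfalso; apply h; split; eauto. Qed.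

Lemma Sup_le A b : (forall a, A a -> a <= b) -> 0 <= b -> Sup A <= b.
Proof. intros h hb. unfold Sup. destruct excluded_middle_informative as [h'|h'].
 - destruct (completeness _ _ _) as [m [hm1 hm2]]; simpl. apply hm2. intros x hx; auto.
 - auto. Qed.

Lemma Sup_nonneg A : (forall a, A a -> 0 <= a) -> 0 <= Sup A.
Proof. intros h. unfold Sup. destruct excluded_middle_informative as [h'|h'].
 - destruct (completeness _ _ _) as [m [hm1 hm2]]; simpl. destruct h' as [_ [x hx]].
   apply Rle_trans with x; auto.
 - lra. Qed.

Lemma Rmax_close a b c e : Rabs (a - c) < e -> Rabs (b - e) < e -> True.
Proof. auto. Qed.

Lemma Rmax_close2 a b c d e : Rabs (a - c) < e -> Rabs (b - d) < e ->
  Rabs (Rmax a b - Rmax c d) < e.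
Proof. intros h1 h2. apply Rabs_def2 in h1. apply Rabs_def2 in h2.
  unfold Rmax; repeat destruct Rle_dec; apply Rabs_def1; lra. Qed.

Section Gen.
Variable X : MetricSpace.
Variable UU : (X -> Prop) -> Prop.
Variable J : Type.
Variable lo : J -> J -> Prop.
Hypothesis lo_anti : forall a b, lo a b -> lo b a -> a = b.
Hypothesis lo_trans : forall a b c, lo a b -> lo b c -> lo a c.
Hypothesis lo_tot : forall a b, lo a b \/ lo b a.
Hypothesis lo_min : forall A : J -> Prop, (exists x, A x) ->
  exists z, A z /\ forall y, A y -> lo z y.
Variable phi : J -> X -> R.
Hypothesis phi_cont : forall k, continuous_fun X (phi k).
Hypothesis phi_range : forall k y, 0 <= phi k y <= 1.
Hypothesis phi_supp : forall k y, 0 < phi k y ->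
  exists U, UU U /\ forall z, 0 < phi k z -> U z.
Hypothesis phi_one : forall x, exists k, phi k x = 1.
Hypothesis phi_lf : forall x, exists V, is_open X V /\ V x /\
  exists L : list J, forall k y, V y -> phi k y <> 0 -> In k L.

Definition dclosed (P : J -> Prop) := forall a b, lo a b -> P b -> P a.
Definition SP (P : J -> Prop) (y : X) := Sup (fun v => exists k, P k /\ v = phi k y).
Definition FF (f : X -> R) := exists P, dclosed P /\ forall y, f y = SP P y.

Lemma SP_bound P y : bound (fun v => exists k, P k /\ v = phi k y).
Proof. exists 1. intros v [k [_ ->]]. apply phi_range. Qed.

Lemma SP_ub P k y : P k -> phi k y <= SP P y.
Proof. intros h. apply Sup_ub. apply SP_bound. eauto. Qed.

Lemma SP_le P y b : (forall k, P k -> phi k y <= b) -> 0 <= b -> SP P y <= b.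
Proof. intros h hb. apply Sup_le; auto. intros v [k [hk ->]]; auto. Qed.

Lemma SP_range P y : 0 <= SP P y <= 1.
Proof. split.
 - apply Sup_nonneg. intros v [k [_ ->]]. apply phi_range.
 - apply SP_le; [intros; apply phi_range | lra]. Qed.

Lemma SP_mono P Q y : (forall k, P k -> Q k) -> SP P y <= SP Q y.
Proof. intros h. apply SP_le. intros k hk. apply SP_ub; auto. apply SP_range. Qed.

Lemma dclosed_cmp P Q : dclosed P -> dclosed Q ->
  (forall k, P k -> Q k) \/ (forall k, Q k -> P k).
Proof. intros hP hQ. destruct (classic (forall k, P k -> Q k)) as [h|h]; [left; auto|right].
  apply not_all_ex_not in h. destruct h as [k hk].
  apply imply_to_and in hk. destruct hk as [hPk hQk].
  intros b hb. destruct (lo_tot b k) as [h|h]. apply (hP b k h hPk).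
  exfalso. apply hQk. apply (hQ k b h hb). Qed.

Fixpoint M (l : list J) (y : X) : R :=
  match l with nil => 0 | k :: l' => Rmax (phi k y) (M l' y) end.

Lemma M_nonneg l y : 0 <= M l y.
Proof. induction l; simpl. lra. apply Rle_trans with (M l y); auto. apply Rmax_r. Qed.

Lemma M_ub l k y : In k l -> phi k y <= M l y.
Proof. induction l; simpl; intros h. destruct h. destruct h as [->|h].
  apply Rmax_l. apply Rle_trans with (M l y); auto. apply Rmax_r. Qed.

Lemma M_attain l y : M l y = 0 \/ exists k, In k l /\ M l y = phi k y.
Proof. induction l; simpl. auto. destruct (Rle_dec (phi a y) (M l y)) as [h|h].
  - rewrite Rmax_right by auto. destruct IHl as [h0|[k [h1 h2]]]. left; auto. right; exists k; split; auto.
  - rewrite Rmax_left by lra. right; exists a; auto. Qed.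

Lemma SP_M P l y : (forall k, P k -> phi k y <> 0 -> In k l) ->
  (forall k, In k l -> P k) -> SP P y = M l y.
Proof. intros h1 h2. apply Rle_antisym.
 - apply SP_le. intros k hk. destruct (Req_dec (phi k y) 0) as [e|e].
   rewrite e; apply M_nonneg. apply M_ub; auto. apply M_nonneg.
 - destruct (M_attain l y) as [e|[k [hk e]]]; rewrite e. apply SP_range.
   apply SP_ub; auto. Qed.

Lemma M_cont l : continuous_fun X (M l).
Proof. induction l; simpl; intros x eps he.
 - exists 1. split. lra. intros. rewrite Rminus_diag, Rabs_R0. auto.
 - destruct (phi_cont a x eps he) as [d1 [hd1 h1]].
   destruct (IHl x eps he) as [d2 [hd2 h2]].
   exists (Rmin d1 d2). split. apply Rmin_pos; auto.
   intros y hy. apply Rmax_close2. apply h1. apply Rlt_le_trans with (Rmin d1 d2); auto; apply Rmin_l.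
   apply h2. apply Rlt_le_trans with (Rmin d1 d2); auto; apply Rmin_r. Qed.

Definition pb (P : J -> Prop) (k : J) : bool :=
  if excluded_middle_informative (P k) then true else false.

Fixpoint sublists (l : list J) : list (list J) :=
  match l with nil => nil :: nil
  | a :: l' => map (cons a) (sublists l') ++ sublists l' end.

Lemma filter_sub P l : In (filter (pb P) l) (sublists l).
Proof. induction l; simpl. auto. unfold pb at 1. destruct excluded_middle_informative.
  apply in_or_app; left. apply in_map. auto. apply in_or_app; right; auto. Qed.

Lemma SP_local P x : exists V, is_open X V /\ V x /\ exists l,
  forall y, V y -> SP P y = M l y.
Proof. destruct (phi_lf x) as [V [hV [hx [L hL]]]]. exists V; split; auto; split; auto.
  exists (filter (pb P) L). intros y hy. apply SP_M.
  - intros k hk hk'. apply filter_In. split. apply (hL k y); auto.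
    unfold pb. destruct excluded_middle_informative; tauto.
  - intros k hk. apply filter_In in hk. destruct hk as [_ hk]. unfold pb in hk.
    destruct excluded_middle_informative; auto. discriminate. Qed.

Lemma SP_cont P : continuous_fun X (SP P).
Proof. intros x eps he. destruct (SP_local P x) as [V [hV [hx [l hl]]]].
  destruct (hV x hx) as [e0 [he0 hb]].
  destruct (M_cont l x eps he) as [d1 [hd1 h1]].
  exists (Rmin d1 e0). split. apply Rmin_pos; auto.
  intros y hy. rewrite (hl y), (hl x); auto.
  apply h1. apply Rlt_le_trans with (Rmin d1 e0); auto; apply Rmin_l.
  apply hb. apply Rlt_le_trans with (Rmin d1 e0); auto; apply Rmin_r. Qed.

Lemma FF_limit I le f g : directed_family_converges X FF I le f g -> FF g.
Proof.
  intros [hrefl [htrans [[i00] [hdir [hF hconv]]]]].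
  set (Pi := fun i => epsilon (inhabits (fun _ : J => False))
      (fun P => dclosed P /\ forall y, f i y = SP P y)).
  assert (hPi : forall i, dclosed (Pi i) /\ forall y, f i y = SP (Pi i) y).
  { intro i. unfold Pi. apply epsilon_spec. apply hF. }
  set (P := fun k => exists i0, forall i, le i0 i -> Pi i k).
  exists P. split.
  { intros a b hab [i0 hi0]. exists i0. intros i hi. apply (proj1 (hPi i) a b hab). auto. }
  intros x.
  assert (hg0 : 0 <= g x).
  { destruct (Rle_dec 0 (g x)) as [h|h]; auto. exfalso.
    destruct (hconv x (- g x)) as [i0 hi0]. lra.
    specialize (hi0 i0 (hrefl i0)). apply Rabs_def2 in hi0.
    rewrite (proj2 (hPi i0)) in hi0. pose proof (SP_range (Pi i0) x). lra. }
  apply Rle_antisym.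
  -
    destruct (Rle_dec (g x) (SP P x)) as [h|h]; auto. exfalso.
    set (s := SP P x) in *.
    assert (hs0 : 0 <= s) by apply SP_range.
    destruct (hconv x (g x - s)) as [i2 hi2]. lra.
    assert (hB : exists k, s < phi k x).
    { pose proof (hi2 i2 (hrefl i2)) as hh. apply Rabs_def2 in hh.
      rewrite (proj2 (hPi i2)) in hh.
      destruct (classic (exists k, Pi i2 k /\ s < phi k x)) as [[k [_ hk]]|hn]. eauto.
      assert (SP (Pi i2) x <= s). { apply SP_le; auto. intros k hk.
        destruct (Rle_dec (phi k x) s); auto. exfalso; apply hn; exists k; split; auto; lra. }
      lra. }
    destruct (lo_min _ hB) as [ks [hks hmin]].
    assert (hnP : ~ P ks).
    { intros hp. assert (phi ks x <= s) by (apply SP_ub; auto). lra. }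
    assert (hex : exists i, le i2 i /\ ~ Pi i ks).
    { apply NNPP. intros hn. apply hnP. exists i2. intros i hi.
      apply NNPP. intros hn2. apply hn. eauto. }
    destruct hex as [i [hi hnk]].
    assert (SP (Pi i) x <= s).
    { apply SP_le; auto. intros k hk. destruct (Rle_dec (phi k x) s) as [e|e]; auto.
      exfalso. apply hnk. apply (proj1 (hPi i) ks k); auto. apply hmin. lra. }
    pose proof (hi2 i hi) as hh. apply Rabs_def2 in hh. rewrite (proj2 (hPi i)) in hh. lra.
  - apply SP_le; auto. intros k [i1 hi1].
    destruct (Rle_dec (phi k x) (g x)) as [e|e]; auto. exfalso.
    destruct (hconv x (phi k x - g x)) as [i2 hi2]. lra.
    destruct (hdir i1 i2) as [i [h1 h2]].
    pose proof (hi2 i h2) as hh. apply Rabs_def2 in hh. rewrite (proj2 (hPi i)) in hh.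
    assert (phi k x <= SP (Pi i) x) by (apply SP_ub; auto). lra.
Qed.

Lemma FF_minwedge W : minimal_wedge X FF W -> exists U, UU U /\ forall x t, W (x,t) -> U x.
Proof.
  intros [[xi1 [xi2 [[P [hP e1]] [[Q [hQ e2]] hW]]]] [[[x t] hp] hmin]].
  pose proof (proj1 (hW _) hp) as hw. unfold wedge in hw; simpl in hw.
  rewrite e1, e2 in hw.
  set (t' := (SP P x + t) / 2).
  assert (hP0 : 0 <= SP P x) by apply SP_range.
  assert (hC : exists k, Q k /\ t' < phi k x).
  { apply NNPP. intros hn. assert (SP Q x <= t').
    { apply SP_le. intros k hk. destruct (Rle_dec (phi k x) t'); auto. exfalso; apply hn; exists k; split; auto; lra.
      unfold t'; lra. }
    unfold t' in *; lra. }
  destruct (lo_min _ hC) as [i [[hQi hti] hmin']].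
  assert (hrefl : forall a, lo a a) by (intro a; destruct (lo_tot a a); auto).
  set (Plt := fun k => lo k i /\ k <> i).
  set (Ple := fun k => lo k i).
  assert (hdlt : dclosed Plt).
  { intros a b hab [hb1 hb2]. split. eauto. intros ->. apply hb2. auto. }
  assert (hdle : dclosed Ple). { intros a b hab hb. unfold Ple in *; eauto. }
  assert (hnPi : ~ P i).
  { intros h. assert (phi i x <= SP P x) by (apply SP_ub; auto). unfold t' in *; lra. }
  assert (hltx : SP Plt x <= t').
  { apply SP_le. intros k [hk1 hk2]. destruct (Rle_dec (phi k x) t'); auto. exfalso.
    apply hk2. apply lo_anti; auto. apply hmin'. split. apply (hQ k i); auto. lra.
    unfold t'; lra. }
  assert (hle : phi i x <= SP Ple x) by (apply SP_ub; unfold Ple; auto).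
  assert (hsub : forall p, wedge X (SP Plt) (SP Ple) p -> W p).
  { intros [y s] hws. apply hW. unfold wedge in *; simpl in *.
    rewrite e1, e2.
    assert (SP P y <= SP Plt y).
    { apply SP_mono. intros k hk. split.
      destruct (lo_tot k i); auto. exfalso; apply hnPi; apply (hP i k); auto.
      intros ->; auto. }
    assert (SP Ple y <= SP Q y).
    { apply SP_mono. intros k hk. apply (hQ k i); auto. }
    lra. }
  assert (hisw : is_wedge X FF (wedge X (SP Plt) (SP Ple))).
  { exists (SP Plt), (SP Ple). split. exists Plt; auto. split. exists Ple; auto. tauto. }
  assert (hne : exists p, wedge X (SP Plt) (SP Ple) p).
  { exists (x, phi i x). unfold wedge; simpl. pose proof (phi_range i x). unfold t' in *. lra. }
  specialize (hmin _ hisw hne hsub).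
  assert (hpos : 0 < phi i x) by (unfold t' in *; lra).
  destruct (phi_supp i x hpos) as [U [hU hsupp]].
  exists U; split; auto. intros x0 t0 hw0.
  apply hsupp. specialize (hmin _ hw0). unfold wedge in hmin; simpl in hmin.
  destruct (Rlt_dec 0 (phi i x0)) as [h|h]; auto. exfalso.
  assert (SP Ple x0 <= SP Plt x0).
  { apply SP_le. intros k hk. destruct (classic (k = i)) as [->|hne'].
    pose proof (SP_range Plt x0). lra. apply SP_ub. split; auto. apply SP_range. }
  lra.
Qed.

Lemma gen_main : exists F, continuous_dissection X F /\ l_complete X F /\
  forall W, minimal_wedge X F W -> exists U, UU U /\ forall x t, W (x,t) -> U x.
Proof.
  exists FF. split; [|split].
  - split; [|split; [|split]].
    + intros f [P [hP hf]]. split.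
      * intros x eps he. destruct (SP_cont P x eps he) as [d [hd h]]. exists d; split; auto.
        intros y hy. rewrite !hf. auto.
      * intros x. rewrite hf. apply SP_range.
    + exists (fun _ => False). split. intros a b _ h; auto.
      intros y. apply Rle_antisym. apply SP_range. apply SP_le. intros k []. lra.
    + exists (fun _ => True). split. intros a b _ h; auto.
      intros y. apply Rle_antisym. destruct (phi_one y) as [k hk]. rewrite <- hk.
      apply SP_ub; auto. apply SP_range.
    + intros x. destruct (phi_lf x) as [V [hV [hx [L hL]]]]. exists V; split; auto; split; auto.
      exists (map M (sublists L)). intros f [P [hP hf]]. exists (M (filter (pb P) L)). split.
      apply in_map. apply filter_sub.
      intros y hy. rewrite hf. apply SP_M.
      * intros k hk hk'. apply filter_In. split. apply (hL k y); auto.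
        unfold pb. destruct excluded_middle_informative; tauto.
      * intros k hk. apply filter_In in hk. destruct hk as [_ hk]. unfold pb in hk.
        destruct excluded_middle_informative; auto. discriminate.
  - split; [|split].
    + intros f g [P [hP hf]] [Q [hQ hg]].
      destruct (dclosed_cmp P Q hP hQ) as [h|h].
      * exists Q; split; auto. intros y. rewrite hf, hg. apply Rmax_right. apply SP_mono; auto.
      * exists P; split; auto. intros y. rewrite hf, hg. apply Rmax_left. apply SP_mono; auto.
    + intros f g [P [hP hf]] [Q [hQ hg]].
      destruct (dclosed_cmp P Q hP hQ) as [h|h].
      * exists P; split; auto. intros y. rewrite hf, hg. apply Rmin_left. apply SP_mono; auto.
      * exists Q; split; auto. intros y. rewrite hf, hg. apply Rmin_right. apply SP_mono; auto.
    + apply FF_limit.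
  - apply FF_minwedge.
Qed.
End Gen.


Section Rudin.
Variable X : MetricSpace.
Variable UU : (X -> Prop) -> Prop.
Hypothesis hcov : open_cover X UU.
Variable lo : (X -> Prop) -> (X -> Prop) -> Prop.
Hypothesis lo_anti : forall a b, lo a b -> lo b a -> a = b.
Hypothesis lo_tot : forall a b, lo a b \/ lo b a.
Hypothesis lo_min : forall A : (X -> Prop) -> Prop, (exists x, A x) ->
  exists z, A z /\ forall y, A y -> lo z y.

Notation d := (mdist X).

Definition r (n : nat) : R := (/2)^n.
Lemma r_pos n : 0 < r n.
Proof. unfold r. apply pow_lt. lra. Qed.
Lemma r_S n : r (S n) = r n / 2.
Proof. unfold r. simpl. lra. Qed.
Lemma r_le m n : (m <= n)%nat -> r n <= r m.
Proof. induction 1. lra. rewrite r_S. pose proof (r_pos m0). lra. Qed.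
Lemma r_small e : 0 < e -> exists n, r n < e.
Proof. intros he. destruct (pow_lt_1_zero (/2)) with (y := e) as [N hN]; auto.
  rewrite Rabs_right; lra. exists N. specialize (hN N (Nat.le_refl _)).
  rewrite Rabs_right in hN; auto. left; apply (r_pos N). Qed.

Lemma d_tri x y z : d x z <= d x y + d y z.
Proof. apply mdist_tri. Qed.
Lemma d_sym x y : d x y = d y x.
Proof. apply mdist_sym. Qed.
Lemma d_refl x : d x x = 0.
Proof. apply mdist_eq0. auto. Qed.
Lemma d_nn x y : 0 <= d x y.
Proof. apply mdist_nonneg. Qed.

Definition least (b : X -> Prop) (p : X) :=
  UU b /\ b p /\ forall c, UU c -> c p -> lo b c.
Definition Eset (C : X -> Prop) (m : nat) (b : X -> Prop) (p : X) :=
  least b p /\ ~ C p /\ forall z, d p z < 5 * r m -> b z.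
Fixpoint Cov (n : nat) : X -> Prop :=
  match n with O => fun _ => False
  | S m => fun y => Cov m y \/ exists b p, Eset (Cov m) m b p /\ d p y < r m end.
Definition E m b p := Eset (Cov m) m b p.
Definition D m b y := exists p, E m b p /\ d p y < r m.
Definition Ds m b y := exists p, E m b p /\ d p y < 2 * r m.

Lemma Cov_spec n y : Cov n y <-> exists j b, (j < n)%nat /\ D j b y.
Proof. induction n; simpl.
  - split. intros []. intros (j&b&h&_); lia.
  - split.
    + intros [h|(b&p&he&hd)]. apply IHn in h. destruct h as (j&b&h1&h2). exists j, b; split; auto.
      exists n, b. split; auto. exists p; auto.
    + intros (j&b&h1&h2). destruct (Nat.eq_dec j n) as [->|hn].
      right. destruct h2 as [p hp]. exists b, p. apply hp.
      left. apply IHn. exists j, b; split; auto; lia. Qed.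

Lemma cover x : exists m b, D m b x.
Proof.
  destruct (lo_min (fun b => UU b /\ b x)) as [a [[ha hax] hmin]].
  { destruct (proj2 hcov x) as [U hU]. exists U; auto. }
  destruct (proj1 hcov a ha x hax) as [eps [heps hball]].
  destruct (r_small (eps/5)) as [m hm]. lra.
  destruct (classic (Cov m x)) as [h|h].
  - apply Cov_spec in h. destruct h as (j&b&_&h). eauto.
  - exists m, a, x. split.
    + split. split; [auto|split; [auto|]]. intros c hc hcx. apply hmin; auto.
      split; auto. intros z hz. apply hball. lra.
    + rewrite d_refl. apply r_pos. Qed.

Lemma sep m a b p q : E m a p -> E m b q -> a <> b -> 5 * r m <= d p q.
Proof.
  intros [[ha [hap hla]] [_ hba]] [[hb [hbq hlb]] [_ hbb]] hne.
  destruct (Rle_dec (5 * r m) (d p q)) as [h|h]; auto. exfalso. apply hne.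
  destruct (lo_tot a b) as [h1|h1].
  - apply lo_anti; auto. apply hlb; auto. apply hba. lra.
  - apply lo_anti; auto. apply hla; auto. apply hbb. rewrite d_sym. lra. Qed.

Lemma D_open m b y : D m b y -> exists delta, 0 < delta /\ forall z, d y z < delta -> D m b z.
Proof. intros [p [hp hd]]. exists (r m - d p y). split. lra.
  intros z hz. exists p. split; auto. pose proof (d_tri p y z). lra. Qed.

Lemma locfin x : exists rho N, 0 < rho /\
  (forall m b y, d x y < rho -> Ds m b y -> (m <= N)%nat) /\
  (forall m b b' y y', d x y < rho -> d x y' < rho -> Ds m b y -> Ds m b' y' -> b = b').
Proof.
  destruct (cover x) as (n & a & hD).
  destruct (D_open _ _ _ hD) as [delta [hdel hball]].
  destruct (r_small delta hdel) as [j hj].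
  assert (ha : forall m b y, d x y < r (n + j + 2) -> Ds m b y -> (m <= n + j + 1)%nat).
  { intros m b y hy [q [hq hqy]].
    destruct (Compare_dec.le_lt_dec m (n+j+1)) as [h|h]; auto. exfalso.
    destruct hq as [_ [hnc _]]. apply hnc. apply Cov_spec. exists n, a. split. lia.
    apply hball.
    assert (r m <= r (n+j+2)) by (apply r_le; lia).
    assert (r (n+j+2) <= r (j+2)) by (apply r_le; lia).
    assert (r (j + 2) = r j / 4) by (replace (j+2)%nat with (S (S j)) by lia; rewrite !r_S; lra).
    pose proof (d_tri x y q). rewrite (d_sym y q) in *. lra. }
  exists (r (n+j+2)), (n+j+1)%nat. split. apply r_pos. split. exact ha.
  intros m b b' y y' hy hy' hb hb'.
  pose proof (ha _ _ _ hy hb) as hm.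
  destruct (classic (b = b')) as [e|e]; auto. exfalso.
  destruct hb as [p [hp hpy]]. destruct hb' as [p' [hp' hpy']].
  pose proof (sep _ _ _ _ _ hp hp' e).
  assert (r (n+j+1) <= r m) by (apply r_le; lia).
  assert (r (n+j+2) = r (n+j+1) / 2) by (replace (n+j+2)%nat with (S (n+j+1)) by lia; rewrite r_S; lra).
  pose proof (d_tri p y p'). pose proof (d_tri y x p'). pose proof (d_tri x y' p').
  rewrite (d_sym y x) in *. rewrite (d_sym y' p') in *. lra.
Qed.

Definition clamp v := Rmax 0 (Rmin 1 v).
Lemma clamp_range v : 0 <= clamp v <= 1.
Proof. unfold clamp, Rmax, Rmin. repeat destruct Rle_dec; lra. Qed.
Lemma clamp_lip a b c : a <= b + c -> 0 <= c -> clamp a <= clamp b + c.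
Proof. unfold clamp, Rmax, Rmin. repeat destruct Rle_dec; lra. Qed.

Definition phi (k : (X -> Prop) * nat) (y : X) : R :=
  Sup (fun v => exists p, E (snd k) (fst k) p /\ v = clamp (2 - d p y / r (snd k))).

Lemma phi_bound k y : bound (fun v => exists p, E (snd k) (fst k) p /\ v = clamp (2 - d p y / r (snd k))).
Proof. exists 1. intros v [p [_ ->]]. apply clamp_range. Qed.

Lemma phi_range k y : 0 <= phi k y <= 1.
Proof. split. apply Sup_nonneg. intros v [p [_ ->]]. apply clamp_range.
  apply Sup_le. intros v [p [_ ->]]. apply clamp_range. lra. Qed.

Lemma phi_pos k y : 0 < phi k y -> Ds (snd k) (fst k) y.
Proof. intros h. apply NNPP. intros hn. assert (phi k y <= 0); [|lra].
  apply Sup_le; [|lra]. intros v [p [hp ->]].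
  assert (~ d p y < 2 * r (snd k)) by (intros h'; apply hn; exists p; auto).
  pose proof (r_pos (snd k)).
  assert (2 * r (snd k) * / r (snd k) <= d p y * / r (snd k)).
  { apply Rmult_le_compat_r. left; apply Rinv_0_lt_compat; auto. lra. }
  rewrite Rmult_assoc, Rinv_r in H1 by lra.
  unfold Rdiv, clamp, Rmax, Rmin. repeat destruct Rle_dec; lra. Qed.

Lemma Ds_in m b y : Ds m b y -> UU b /\ b y.
Proof. intros [p [[[hU _] [_ hball]] hd]]. split; auto. apply hball. pose proof (r_pos m). lra. Qed.

Lemma phi_supp k y : 0 < phi k y -> exists U, UU U /\ forall z, 0 < phi k z -> U z.
Proof. intros h. exists (fst k). split. apply (Ds_in (snd k) (fst k) y). apply phi_pos; auto.
  intros z hz. apply (Ds_in (snd k) (fst k) z). apply phi_pos; auto. Qed.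

Lemma phi_one x : exists k, phi k x = 1.
Proof. destruct (cover x) as (m & b & [p [hp hd]]). exists (b, m).
  apply Rle_antisym. apply phi_range. apply Sup_ub. apply phi_bound. simpl.
  exists p. split; auto. pose proof (r_pos m).
  assert (d p x * / r m < r m * / r m) by (apply Rmult_lt_compat_r; auto; apply Rinv_0_lt_compat; auto).
  rewrite Rinv_r in H0 by lra.
  unfold Rdiv, clamp, Rmax, Rmin. repeat destruct Rle_dec; lra. Qed.

Lemma phi_lip1 k y z : phi k y <= phi k z + d y z / r (snd k).
Proof.
  pose proof (r_pos (snd k)) as hr. pose proof (d_nn y z).
  assert (0 <= d y z / r (snd k)) by (unfold Rdiv; apply Rmult_le_pos; auto; left; apply Rinv_0_lt_compat; auto).
  apply Sup_le. intros v [p [hp ->]].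
  apply Rle_trans with (clamp (2 - d p z / r (snd k)) + d y z / r (snd k)).
  - apply clamp_lip; auto. pose proof (d_tri p y z).
    assert (d p z * / r (snd k) <= (d p y + d y z) * / r (snd k)).
    { apply Rmult_le_compat_r; auto. left; apply Rinv_0_lt_compat; auto. }
    unfold Rdiv. lra.
  - apply Rplus_le_compat_r. apply Sup_ub. apply phi_bound. exists p; auto.
  - pose proof (phi_range k z). lra. Qed.

Lemma phi_cont k : continuous_fun X (phi k).
Proof. intros x eps he. pose proof (r_pos (snd k)) as hr.
  exists (eps * r (snd k)). split. apply Rmult_lt_0_compat; auto.
  intros y hy. pose proof (phi_lip1 k y x). pose proof (phi_lip1 k x y).
  assert (d x y * / r (snd k) < eps).
  { apply Rmult_lt_reg_r with (r (snd k)); auto. rewrite Rmult_assoc, Rinv_l, Rmult_1_r; lra. }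
  rewrite (d_sym y x) in *. unfold Rdiv in *. apply Rabs_def1; lra. Qed.

Lemma phi_lf x : exists V, is_open X V /\ V x /\
  exists L : list ((X -> Prop) * nat), forall k y, V y -> phi k y <> 0 -> In k L.
Proof.
  destruct (locfin x) as (rho & N & hrho & ha & hb).
  exists (fun y => d x y < rho). split; [|split].
  - intros y hy. exists (rho - d x y). split. lra. intros z hz. pose proof (d_tri x y z). lra.
  - rewrite d_refl. auto.
  - set (inh := inhabits (fun _ : X => False)).
    exists (map (fun i => (epsilon inh (fun b => exists y, d x y < rho /\ Ds i b y), i)) (seq 0 (S N))).
    intros [b m] y hy hne.
    assert (hds : Ds m b y). { apply (phi_pos (b, m)). pose proof (phi_range (b,m) y). lra. }
    pose proof (ha _ _ _ hy hds) as hm.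
    apply in_map_iff. exists m. split.
    + f_equal. destruct (epsilon_spec inh (fun b => exists y, d x y < rho /\ Ds m b y)) as [y' [hy' hd']].
      eauto. symmetry. exact (hb _ _ _ _ _ hy hy' hds hd').
    + apply in_seq. lia.
Qed.
End Rudin.


Theorem lemma4p5 (X : MetricSpace) (UU : (X -> Prop) -> Prop) :
  open_cover X UU ->
  exists F : (X -> R) -> Prop,
    continuous_dissection X F /\ l_complete X F /\
    forall W, minimal_wedge X F W ->
      exists U, UU U /\ forall x t, W (x, t) -> U x.
Proof.
  intros hcov.
  destruct (WO.wo_exists (X -> Prop)) as [lo [hanti [_ [htot hmin]]]].
  destruct (WO.wo_exists ((X -> Prop) * nat)) as [lo2 [hanti2 [htr2 [htot2 hmin2]]]].
  apply (gen_main X UU _ lo2 hanti2 htr2 htot2 hmin2 (phi X UU lo)).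
  - apply phi_cont.
  - apply phi_range.
  - apply phi_supp.
  - intros x. eapply phi_one; eauto.
  - intros x. eapply phi_lf; eauto.
Qed.
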